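(* Let $g:\mathbb{R}\to\mathbb{R}$ and suppose that $g$ is not a polynomial on some open interval $I\subset\mathbb{R}$, and that there exists a point of $I$ at which $g$ is infinitely many times differentiable. Let ${\bf x}_1,\ldots,{\bf x}_N$ be distinct points in $\mathbb{R}^d$ (with $N\gg d$), and let $X$ be the $N\times d$ matrix whose $i$-th row is ${\bf x}_i$. Then for any integer $m$ with $d<m\le N$ there exist a $d\times m$ real matrix $W$ and an $m$-dimensional real row vector $b$ such that the $N\times m$ matrix $g(XW+\mathbb{1}b)$ has rank $m$. The same statement holds if $g(t)=\max\{t,0\}$. On the other hand, if $g$ is a polynomial of degree $p$, then for every $d\times m$ matrix $W$ (any $m$) and every $m$-dimensional row vector $b$, the rank of $g(XW+\mathbb{1}b)$ is at most $\binom{p+d}{p}$.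
   Context: $\mathbb{1}$ denotes the $N$-dimensional column vector all of whose entries equal $1$, so $XW+\mathbb{1}b$ is the $N\times m$ matrix whose $(i,j)$ entry is ${\bf x}_i\cdot W_{\cdot j}+b_j$. For a matrix $U$, $g(U)$ denotes the matrix obtained by applying $g$ to every entry of $U$. *)

(* Defs.v *)
From HB Require Import structures.
From mathcomp Require Import all_boot all_order all_algebra.
From mathcomp Require Import all_classical all_reals all_analysis.
Set Implicit Arguments. Unset Strict Implicit. Unset Printing Implicit Defensive.
Import Order.TTheory GRing.Theory Num.Theory.
Import numFieldNormedType.Exports.
Local Open Scope ring_scope.

Definition ones (R : realType) (N : nat) : 'cV[R]_N := const_mx 1.

Definition layer (R : realType) (g : R -> R) (N d m : nat)
  (X : 'M[R]_(N, d)) (W : 'M[R]_(d, m)) (b : 'rV[R]_m) : 'M[R]_(N, m) :=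
  map_mx g (X *m W + ones R N *m b).

(* g is infinitely many times differentiable at x0: for every n, the
   derivatives g, g', ..., g^(n-1) are all differentiable on some
   neighbourhood of x0 (so g^(n) genuinely exists near x0). *)
Definition smooth_at (R : realType) (g : R -> R) (x0 : R) : Prop :=
  forall n : nat, exists2 e : R, 0 < e &
    forall y : R, `|y - x0| < e ->
      forall k : nat, (k < n)%N -> derivable (derive1n k g) y 1.

Definition poly_on (R : realType) (g : R -> R) (I : set R) : Prop :=
  exists q : {poly R}, forall x, I x -> g x = q.[x].

Definition open_itv (R : realType) (a b : \bar R) : set R :=
  fun x => (a < x%:E)%E /\ (x%:E < b)%E.

Definition relu (R : realType) (t : R) : R := Num.max t 0.

(* Main.v *)
Require Import Defs.
From HB Require Import structures.
From mathcomp Require Import all_boot all_order all_algebra.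
From mathcomp Require Import all_classical all_reals all_analysis.
From mathcomp Require Import ring lra.
Import Order.TTheory GRing.Theory Num.Theory.
Local Open Scope ring_scope.
Section PA.
Variable R : realType.

Lemma mom_poly N (l t : 'I_N -> R) K :
  (forall k, (k < K)%N -> \sum_i l i * t i ^+ k = 0) ->
  forall Q : {poly R}, (size Q <= K)%N -> \sum_i l i * Q.[t i] = 0.
Proof.
move=> Hm Q HQ.
under eq_bigr => i _ do rewrite horner_coef big_distrr /=.
rewrite exchange_big /= big1 // => j _.
under eq_bigr => i _ do rewrite mulrCA.
rewrite -big_distrr /= Hm ?mulr0 //.
exact: leq_trans (ltn_ord j) HQ.
Qed.

Lemma vander N (l t : 'I_N -> R) : injective t ->
  (forall k, (k < N)%N -> \sum_i l i * t i ^+ k = 0) -> forall i, l i = 0.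
Proof.
move=> tI Hm i.
pose Q := \prod_(j | j != i) ('X - (t j)%:P).
have sQ : (size Q <= N)%N.
  rewrite /Q -big_filter size_prod_XsubC deprecated_filter_index_enum -cardE.
  rewrite (_ : #|_| = #|predC1 i|); last by apply: eq_card => j.
  by rewrite cardC1 card_ord; case: N i {l t tI Hm Q} => [[]|].
have := @mom_poly N l t N Hm Q sQ.
rewrite (bigD1 i) //= big1 ?addr0.
  move/eqP; rewrite mulf_eq0 => /orP[/eqP //|].
  rewrite /Q horner_prod prodf_seq_eq0 => /hasP[j _ /andP[ji]].
  by rewrite hornerXsubC subr_eq0 => /eqP /tI E; rewrite E eqxx in ji.
move=> j ji; rewrite /Q horner_prod (bigD1 j) //= hornerXsubC subrr mul0r.
by rewrite mulr0.
Qed.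
End PA.
Section PB.
Variable R : realType.

Lemma expand_right (h : R -> R) N (l t : 'I_N -> R) (al be : R) :
  injective t -> (exists i, l i != 0) ->
  (forall a c, \sum_i l i * h (a * t i + c) = 0) -> al < be ->
  (forall y, al < y < be -> h y = 0) -> forall y, al < y -> h y = 0.
Proof.
move=> tI [i0 li0] Heq lab H0.
have [j lj jmax] : exists2 j, l j != 0 & forall i, l i != 0 -> t i <= t j.
  case: (@arg_maxP _ _ _ i0 (fun i => l i != 0) t li0) => j Pj Hj.
  by exists j => // i /Hj.
pose P := fun i => (l i != 0) && (i != j).
pose de := \big[Num.min/1]_(i | P i) (t j - t i).
have de_gt0 : 0 < de.
  apply: lt_bigmin => // i /andP[li ij]; rewrite subr_gt0 lt_neqAle jmax // andbT.
  by apply/eqP => /tI E; rewrite E eqxx in ij.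
have de_le i : P i -> de <= t j - t i by move=> Pi; apply: bigmin_le_cond.
pose D := 1 + \sum_i `|t j - t i|.
have D_gt0 : 0 < D by rewrite ltr_pwDl // sumr_ge0.
have D_ge i : t j - t i <= D.
  apply: le_trans (ler_norm _) _; rewrite /D (bigD1 i) //= addrCA ler_wpDr //.
  by rewrite addr_ge0 // sumr_ge0.
pose L := be - al.
have L_gt0 : 0 < L by rewrite subr_gt0.
pose a := L / (2 * D).
have a_gt0 : 0 < a by rewrite divr_gt0 // mulr_gt0.
pose s := a * de.
have s_gt0 : 0 < s by rewrite mulr_gt0.
have step : forall n : nat, forall y, al < y < be + n%:R * s -> h y = 0.
  elim=> [|n IH] y.
    by rewrite mul0r addr0; apply: H0.
  case/andP=> ay yb.
  have [yl|yg] := ltP y (be + n%:R * s); first by apply: IH; rewrite ay yl.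
  have := Heq a (y - a * t j).
  rewrite (bigD1 j) //= big1 ?addr0.
    by rewrite addrCA subrr addr0 => /eqP; rewrite mulf_eq0 (negbTE lj) /= => /eqP.
  move=> i ij; have [->|li] := eqVneq (l i) 0; first by rewrite mul0r.
  have Pi : P i by rewrite /P li ij.
  have -> : a * t i + (y - a * t j) = y - a * (t j - t i).
    by ring.
  rewrite IH ?mulr0 //; apply/andP; split.
    have h1 : a * (t j - t i) <= L / 2.
      apply: le_trans (ler_wpM2l (ltW a_gt0) (D_ge i)) _.
      have -> : a * D = L / 2 by rewrite /a; field; rewrite gt_eqF.
      by [].
    have h2 : be <= y.
      apply: le_trans yg; rewrite ler_wpDr // mulr_ge0 // ltW //.
    rewrite /L in h1; lra.
  have h3 : s <= a * (t j - t i) by rewrite /s; apply: ler_wpM2l; [exact: ltW | exact: de_le].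
  move: yb; rewrite -natr1 mulrDl mul1r; lra.
move=> y ay.
pose n := Num.Def.archi_bound `|(y - be) / s|.
apply: (step n); rewrite ay /=.
rewrite -ltrBlDl -ltr_pdivrMr //.
apply: le_lt_trans (ler_norm _) _; exact: archi_boundP.
Qed.

Lemma expand_all (h : R -> R) N (l t : 'I_N -> R) (al be : R) :
  injective t -> (exists i, l i != 0) ->
  (forall a c, \sum_i l i * h (a * t i + c) = 0) -> al < be ->
  (forall y, al < y < be -> h y = 0) -> forall y, h y = 0.
Proof.
move=> tI ex Heq lab H0 y.
have [ay|ya] := ltP al y; first exact: (@expand_right h N l t al be tI ex Heq lab H0 y ay).
have := @expand_right (fun x => h (- x)) N l (fun i => - t i) (- be) (- al).
rewrite -[y]opprK; apply => //.
- by move=> i1 i2 /oppr_inj /tI.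
- move=> a c; rewrite -[RHS](Heq a (- c)); apply: eq_bigr => i _.
  by rewrite opprD mulrN opprK.
- by rewrite ltrN2.
- by move=> x /andP[x1 x2]; apply: H0; rewrite -ltrN2 opprK x2 /= ltrNl x1.
- by rewrite ltrNl opprK (le_lt_trans ya lab).
Qed.
End PB.
Section PC.
Variable R : realType.

Lemma deriv0_cst (f : R -> R) (al be : R) :
  (forall y, al < y < be -> derivable f y 1 /\ derive1 f y = 0) ->
  forall u v, al < u < be -> al < v < be -> f u = f v.
Proof.
move=> H.
suff W : forall u v, al < u < be -> al < v < be -> u <= v -> f u = f v.
  move=> u v hu hv; have [uv|vu] := leP u v; first exact: W.
  by apply/esym/W => //; apply: ltW.
move=> u v /andP[u1 u2] /andP[v1 v2] uv.
have inI x : x \in `[u, v] -> al < x < be.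
  by rewrite in_itv /= => /andP[x1 x2]; apply/andP; split; lra.
have D1 : forall x, x \in `]u, v[ -> is_derive x 1 f 0.
  move=> x; rewrite in_itv /= => /andP[x1 x2].
  have [dx dx0] : derivable f x 1 /\ derive1 f x = 0.
    by apply: H; apply: inI; rewrite in_itv /= !ltW.
  by have := derivableP dx; rewrite -derive1E dx0.
have := @MVT_segment R f (fun _ => 0) u v uv D1; case.
  apply: (@derivable_within_continuous R _ f `[u, v]%R) => x /inI /H [] //.
move=> c _ E.
by move: E; rewrite mul0r => /eqP; rewrite subr_eq0 => /eqP.
Qed.

Definition prim (P : {poly R}) : {poly R} :=
  \poly_(i < (size P).+1) (if i is j.+1 then P`_j / (j.+1)%:R else 0).

Lemma primK P : (prim P)^`() = P.
Proof.
apply/polyP => i; rewrite coef_deriv coef_poly; case: ltnP => h.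
  by rewrite /= -[(_ / _) *+ _]mulr_natr divfK // pnatr_eq0.
by rewrite mul0rn nth_default.
Qed.

Lemma size_prim P : (size (prim P) <= (size P).+1)%N.
Proof. exact: size_poly. Qed.

Lemma poly_of_derivn (al be : R) : al < be -> forall k (f : R -> R),
  (forall y, al < y < be -> forall j, (j < k)%N -> derivable (derive1n j f) y 1) ->
  (forall y, al < y < be -> derive1n k f y = 0) ->
  exists P : {poly R}, (size P <= k)%N /\ forall y, al < y < be -> f y = P.[y].
Proof.
move=> lab; elim=> [|k IH] f Hd H0.
  by exists 0; split; [rewrite size_poly0 | move=> y /H0; rewrite derive1n0 horner0].
have [P [sP HP]] : exists P : {poly R}, (size P <= k)%N /\
    forall y, al < y < be -> derive1 f y = P.[y].
  apply: IH.
    by move=> y hy j jk; rewrite -derive1Sn; apply: Hd.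
  by move=> y hy; rewrite -derive1Sn; apply: H0.
pose Q := prim P.
have dg y : al < y < be -> derivable (f - horner Q) y 1 /\ derive1 (f - horner Q) y = 0.
  move=> hy; have df : derivable f y 1 by have := Hd y hy 0%N isT.
  split; first by apply: derivableB.
  rewrite derive1E deriveB //.
  rewrite -!derive1E -derivE primK HP //= subrr //.
pose x0 := (al + be) / 2.
have hx0 : al < x0 < be by apply/andP; split; rewrite /x0; lra.
exists (Q + ((f - horner Q) x0)%:P); split.
  apply: leq_trans (size_polyD _ _) _; rewrite geq_max size_polyC.
  rewrite (leq_trans (size_prim P)) //; by case: (_ != 0).
move=> y hy; rewrite hornerD hornerC -(@deriv0_cst (f - horner Q) al be dg y x0 hy hx0) /=.
by rewrite addrC subrK.
Qed.
End PC.
Section PD.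
Variable R : realType.

Lemma aff_derivable (t c a : R) : derivable (fun x : R => x * t + c) a 1.
Proof.
apply: derivableD; last exact: derivable_cst.
by apply: derivableM; [exact: derivable_id | exact: derivable_cst].
Qed.

Lemma aff_derive1 (t c a : R) : derive1 (fun x : R => x * t + c) a = t.
Proof.
rewrite derive1E deriveD; last 2 first.
- by apply: derivableM; [exact: derivable_id | exact: derivable_cst].
- exact: derivable_cst.
rewrite derive_cst addr0 deriveM; last 2 first.
- exact: derivable_id.
- exact: derivable_cst.
by rewrite derive_id derive_cst scaler0 add0r /= -[RHS]mulr1.
Qed.

Lemma comp_aff (G : R -> R) (t c a : R) : derivable G (a * t + c) 1 ->
  is_derive a 1 (fun x => G (x * t + c)) (t * derive1 G (a * t + c)).
Proof.
move=> dG.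
have dc : derivable (G \o (fun x : R => x * t + c)) a 1.
  apply/derivable1_diffP; apply: differentiable_comp.
    exact/derivable1_diffP/aff_derivable.
  exact/derivable1_diffP.
have := derivableP dc; rewrite -derive1E derive1_comp //.
by rewrite aff_derive1 mulrC.
Qed.

Lemma phi_step (G : R -> R) N (w t : 'I_N -> R) (c r a : R) :
  (forall x, -r < x < r -> \sum_i w i * G (x * t i + c) = 0) ->
  -r < a < r -> (forall i, derivable G (a * t i + c) 1) ->
  \sum_i w i * t i * derive1 G (a * t i + c) = 0.
Proof.
move=> H0 ha dG.
pose phi := fun x => \sum_i w i * G (x * t i + c).
have Hd : is_derive a 1 phi (\sum_i w i *: (t i * derive1 G (a * t i + c))).
  have -> : phi = \sum_i (fun x => w i *: G (x * t i + c)).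
    by rewrite fct_sumE; apply/funext => x.
  apply: is_derive_sum => i.
  have := is_deriveZ (w i) (@comp_aff G (t i) c a (dG i)).
  by congr is_derive; apply/funext.
have : 'D_1 phi a = 'D_1 (cst 0 : R -> R) a.
  apply: near_eq_derive; near=> x.
  have : x \in `]-r, r[ by near: x; apply: near_in_itvoo; rewrite in_itv.
  by rewrite in_itv /= /cst => /H0.
rewrite derive_cst (@derive_val _ _ _ _ _ _ _ Hd) => E.
rewrite -[RHS]E.
by apply: eq_bigr => i _; rewrite /GRing.scale /= mulrA.
Unshelve. all: by end_near.
Qed.

Lemma phi_zero (g : R -> R) N (l t : 'I_N -> R) (x0 e : R) : 0 < e ->
  (forall y, `|y - x0| < e -> forall k, (k < N)%N -> derivable (derive1n k g) y 1) ->
  (forall a c, \sum_i l i * g (a * t i + c) = 0) ->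
  forall k, (k < N)%N -> forall c, `|c - x0| < e / 2 ->
  (\sum_i l i * t i ^+ k) * derive1n k g c = 0.
Proof.
move=> e0 Hd Heq.
pose T := 1 + \sum_i `|t i|.
have T0 : 0 < T by rewrite ltr_pwDl // sumr_ge0.
have Tge i : `|t i| <= T.
  by rewrite /T (bigD1 i) //= addrCA ler_wpDr // addr_ge0 // sumr_ge0.
pose r := e / (2 * T).
have r0 : 0 < r by rewrite divr_gt0 // mulr_gt0.
have rT : r * T = e / 2 by rewrite /r; field; rewrite gt_eqF.
have bound c a i : `|c - x0| < e / 2 -> - r < a < r -> `|a * t i + c - x0| < e.
  move=> hc ha.
  have h1 : `|a * t i| < e / 2.
    rewrite normrM -rT.
    have : `|a| < r by rewrite ltr_norml.
    move=> har; apply: le_lt_trans (ler_wpM2l (normr_ge0 a) (Tge i)) _.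
    by rewrite ltr_pM2r.
  rewrite -addrA; apply: le_lt_trans (ler_normD _ _) _; lra.
have claim : forall k, (k < N)%N -> forall c, `|c - x0| < e / 2 ->
    forall a, - r < a < r -> \sum_i l i * t i ^+ k * derive1n k g (a * t i + c) = 0.
  elim=> [|k IH] kN c hc.
    by move=> a ha; rewrite -[RHS](Heq a c); apply: eq_bigr => i _; rewrite expr0 mulr1.
  move=> a ha.
  have P := @phi_step (derive1n k g) N (fun i => l i * t i ^+ k) t c r a.
  rewrite -derive1nS in P; rewrite -[RHS]P //.
  - by apply: eq_bigr => i _; rewrite exprSr !mulrA.
  - by move=> x hx; apply: IH => //; apply: ltnW.
  - move=> i; apply: Hd; last exact: ltnW.
    exact: bound.
move=> k kN c hc; rewrite big_distrl /= -[RHS](claim k kN c hc 0).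
  by apply: eq_bigr => i _; rewrite mul0r add0r.
by rewrite oppr_lt0 r0.
Qed.
End PD.
Section PG.
Variable R : realType.

Lemma size_comp_aff (P : {poly R}) (a c : R) :
  (size (P \Po (a *: 'X + c%:P)) <= size P)%N.
Proof.
have [->|P0] := eqVneq P 0; first by rewrite comp_poly0.
apply: leq_trans (size_comp_poly_leq _ _) _.
have sq : (size (a *: 'X + c%:P)%R <= 2)%N.
  apply: leq_trans (size_polyD _ _) _; rewrite geq_max.
  rewrite (leq_trans (size_scale_leq _ _)) ?size_polyX //.
  by rewrite (leq_trans (size_polyC_leq1 _)).
have : ((size (a *: 'X + c%:P)%R).-1 <= 1)%N by case: (size _) sq => [|[|[]]].
move=> h; rewrite -[X in (_ <= X)%N](prednK _) ?size_poly_gt0 // ltnS.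
by rewrite -[X in (_ <= X)%N]muln1 leq_mul.
Qed.

Lemma ball_itv (x0 d y : R) : (`|y - x0| < d) = (x0 - d < y < x0 + d).
Proof.
rewrite ltr_norml; apply/idP/idP => /andP[h1 h2]; apply/andP; split; lra.
Qed.

Lemma key (g : R -> R) N (l t : 'I_N -> R) (I : set R) (x0 : R) :
  injective t -> ~ poly_on g I -> smooth_at g x0 ->
  (forall a c, \sum_i l i * g (a * t i + c) = 0) -> forall i, l i = 0.
Proof.
move=> tI npoly sm Heq.
case: (pickP (fun i => l i != 0)) => [i0 li0|none]; last first.
  by move=> i; apply/eqP; have := none i; rewrite /= => /negbFE.
exfalso.
have [e e0 Hd] := sm N.
have Z := @phi_zero R g N l t x0 e e0 Hd Heq.
have ex : exists k, (k < N)%N && (\sum_i l i * t i ^+ k != 0).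
  case: (boolP [exists k : 'I_N, \sum_i l i * t i ^+ k != 0]).
    by case/existsP => k hk; exists k; rewrite ltn_ord hk.
  move/existsPn => H; exfalso.
  have : l i0 = 0.
    apply: (@vander R N l t tI) => k kN.
    by have := H (Ordinal kN); rewrite negbK => /eqP.
  by move/eqP; rewrite (negbTE li0).
case: (ex_minnP ex) => k0 /andP[k0N mk0] minP.
have mom : forall j, (j < k0)%N -> \sum_i l i * t i ^+ j = 0.
  move=> j jk; have jN := ltn_trans jk k0N.
  apply/eqP; apply: contraTT jk => hj.
  by rewrite -leqNgt; apply: minP; rewrite jN hj.
have G0 : forall c, `|c - x0| < e / 2 -> derive1n k0 g c = 0.
  move=> c hc; have /eqP := Z k0 k0N c hc.
  by rewrite mulf_eq0 (negbTE mk0) /= => /eqP.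
have lab : x0 - e / 2 < x0 + e / 2 by lra.
have H1 : forall y, x0 - e / 2 < y < x0 + e / 2 ->
    forall j, (j < k0)%N -> derivable (derive1n j g) y 1.
  move=> y hy j jk; apply: Hd; last exact: ltn_trans jk k0N.
  by move: hy; rewrite -ball_itv => hy; lra.
have H2 : forall y, x0 - e / 2 < y < x0 + e / 2 -> derive1n k0 g y = 0.
  by move=> y; rewrite -ball_itv; apply: G0.
have [P [sP HP]] := @poly_of_derivn R _ _ lab k0 g H1 H2.
pose h := fun y => g y - P.[y].
have Hh : forall a c, \sum_i l i * h (a * t i + c) = 0.
  move=> a c; rewrite /h.
  under eq_bigr => i _ do rewrite mulrBr.
  rewrite sumrB Heq sub0r.
  have := @mom_poly R N l t k0 mom (P \Po (a *: 'X + c%:P)).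
  rewrite (leq_trans (size_comp_aff _ _ _)) // => /(_ isT) E.
  have E2 : \sum_i l i * P.[a * t i + c] = 0.
    rewrite -[RHS]E; apply: eq_bigr => i _.
    by rewrite horner_comp hornerD hornerZ hornerX hornerC.
  by rewrite E2 oppr0.
have h0 := @expand_all R h N l t _ _ tI (ex_intro _ i0 li0) Hh lab.
apply: npoly; exists P => x _.
have := h0 _ x; rewrite /h => H; apply/eqP; rewrite -subr_eq0 H //.
by move=> y hy; rewrite HP // subrr.
Qed.
End PG.
Section PH.
Variable R : realType.

Lemma exists_nonroot (Q : {poly R}) : Q != 0 -> exists s, Q.[s] != 0.
Proof.
move=> Q0.
pose rs := [seq (k%:R : R) | k <- iota 0 (size Q)].
case: (boolP (all (root Q) rs)) => [H|].
  have U : uniq rs by rewrite map_inj_uniq ?iota_uniq //; by move=> x y /eqP; rewrite eqr_nat => /eqP.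
  by have := max_poly_roots Q0 H U; rewrite size_map size_iota ltnn.
by case/allPn => s _ hs; exists s.
Qed.

Lemma exists_proj N d (X : 'M[R]_(N, d)) :
  injective (fun i : 'I_N => row i X) ->
  exists w : 'cV[R]_d, injective (fun i : 'I_N => (X *m w) i 0).
Proof.
move=> XI.
pose p (i i' : 'I_N) : {poly R} := \sum_(k < d) (X i k - X i' k) *: 'X^k.
have hp i i' s : (p i i').[s] = \sum_(k < d) X i k * s ^+ k - \sum_(k < d) X i' k * s ^+ k.
  rewrite /p horner_sum -sumrB; apply: eq_bigr => k _.
  by rewrite hornerZ hornerXn mulrBl.
have p0 i i' : i != i' -> p i i' != 0.
  move=> ii; apply/negP => /eqP P0.
  have : row i X = row i' X.
    apply/rowP => k; rewrite !mxE; apply/eqP; rewrite -subr_eq0.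
    have := congr1 (fun q : {poly R} => q`_k) P0.
    rewrite coef0 /p coef_sum => <-.
    rewrite (bigD1 k) //= coefZ coefXn eqxx mulr1 big1 ?addr0 //.
    move=> k' kk; rewrite coefZ coefXn.
    by rewrite (_ : (k == k' :> nat) = false) ?mulr0 //; apply/negbTE; rewrite eq_sym.
  by move/XI/eqP; rewrite (negbTE ii).
pose Q := \prod_(ii : 'I_N * 'I_N | ii.1 != ii.2) p ii.1 ii.2.
have Q0 : Q != 0 by apply/prodf_neq0 => ii /p0.
have [s Qs] := exists_nonroot Q Q0.
exists (\col_k s ^+ k) => i i' /= E.
apply/eqP; apply: contraNT Qs => ii.
rewrite /Q horner_prod (bigD1 (i, i')) //= hp.
have cE j : (\col_k s ^+ k) j 0 = s ^+ j :> R by rewrite mxE.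
move: E; rewrite !mxE.
under [in X in X = _ -> _]eq_bigr do rewrite cE.
under [in X in _ = X -> _]eq_bigr do rewrite cE.
by move=> ->; rewrite subrr mul0r.
Qed.
End PH.
Section PI.
Variable R : realType.

Lemma rank_add_row n m (A : 'M[R]_(m, n)) (v : 'rV[R]_n) :
  ~~ (v <= A)%MS -> \rank (A + v)%MS = (\rank A).+1.
Proof.
move=> vA.
have v0 : v != 0 by apply: contraNneq vA => ->; rewrite sub0mx.
have C0 : (A :&: v)%MS = 0.
  apply/eqP; rewrite -mxrank_eq0; apply: contraNT vA => Cn0.
  have E : (A :&: v == v)%MS.
    rewrite -(mxrank_leqif_eq (capmxSr A v)).2 rank_rV v0 /=.
    have := mxrank_leqif_eq (capmxSr A v); rewrite rank_rV v0 => [[le _]].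
    by move: Cn0 le; case: (\rank _) => [|[]].
  by case/andP: E => _ vC; apply: submx_trans vC (capmxSl _ _).
by rewrite mxrank_disjoint_sum // rank_rV v0 addn1.
Qed.

Lemma greedy N (t : 'I_N -> R) (g : R -> R) :
  (forall l : 'I_N -> R, (forall a c, \sum_i l i * g (a * t i + c) = 0) -> forall i, l i = 0) ->
  forall k, (k <= N)%N -> exists a c : nat -> R,
    \rank (\matrix_(j < k, i < N) g (a j * t i + c j)) = k.
Proof.
move=> Hk; elim=> [|k IH] kN.
  by exists (fun _ => 0), (fun _ => 0); apply/eqP; rewrite -leqn0 rank_leq_row.
have [a [c rA]] := IH (ltnW kN).
set A := \matrix_(j < k, i < N) g (a j * t i + c j) in rA.
pose v (a0 c0 : R) := \row_(i < N) g (a0 * t i + c0).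
have [[a0 [c0 nv]]|H] := pselect (exists a0 c0, ~~ (v a0 c0 <= A)%MS); last first.
  exfalso.
  have : \rank (kermx A^T) != 0%N by rewrite mxrank_ker mxrank_tr rA subn_eq0 -ltnNge.
  rewrite mxrank_eq0 => K0.
  have [r ur] : exists r, row r (kermx A^T) != 0.
    apply/existsP; apply: contraNT K0; rewrite negb_exists => /forallP Z.
    apply/eqP/matrixP => r j; have := Z r; rewrite negbK => /eqP /rowP /(_ j).
    by rewrite !mxE.
  set u := row r (kermx A^T) in ur.
  have uA : u *m A^T = 0 by apply/sub_kermxP; exact: row_sub.
  have u0 : forall i, u 0 i = 0.
    apply: Hk => a1 c1.
    have : (v a1 c1 <= A)%MS.
      by apply: contraT => nv; exfalso; apply: H; exists a1, c1.
    case/submxP => D vD.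
    have : v a1 c1 *m u^T = 0 by rewrite vD -mulmxA -[A]trmxK -trmx_mul uA trmx0 mulmx0.
    move/matrixP => /(_ 0 0); rewrite !mxE => E; rewrite -[RHS]E.
    by apply: eq_bigr => i _; rewrite !mxE mulrC.
  by move: ur; rewrite (_ : u = 0) ?eqxx //; apply/rowP => i; rewrite u0 mxE.
pose a' := fun j => if j == k then a0 else a j.
pose c' := fun j => if j == k then c0 else c j.
exists a', c'.
set B := \matrix_(j < k.+1, i < N) _.
have -> : \rank B = \rank (A + v a0 c0)%MS.
  apply/eqmx_rank/andP; split.
    apply/row_subP => j; case: (ltnP j k) => jk.
      apply: submx_trans (addsmxSl _ _).
      rewrite (_ : row j B = row (Ordinal jk) A) ?row_sub //.
      by apply/rowP => i; rewrite !mxE /a' /c' (ltn_eqF jk).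
    have jk' : j = k :> nat by apply/eqP; rewrite eqn_leq jk -ltnS ltn_ord.
    apply: submx_trans (addsmxSr _ _).
    rewrite (_ : row j B = v a0 c0) ?submx_refl //.
    by apply/rowP => i; rewrite !mxE /a' /c' jk' eqxx.
  rewrite addsmx_sub; apply/andP; split.
    apply/row_subP => j.
    rewrite (_ : row j A = row (widen_ord (leqnSn k) j) B) ?row_sub //.
    by apply/rowP => i; rewrite !mxE /a' /c' /= (ltn_eqF (ltn_ord j)).
  rewrite (_ : v a0 c0 = row (@ord_max k) B) ?row_sub //.
  by apply/rowP => i; rewrite !mxE /a' /c' /= eqxx.
by rewrite rank_add_row // rA.
Qed.
End PI.
Section PJ.
Variable R : realType.

Lemma part1 N d (X : 'M[R]_(N, d)) (Xd : injective (fun i : 'I_N => row i X))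
  (g : R -> R) (I : set R) (x0 : R) :
  ~ poly_on g I -> smooth_at g x0 ->
  forall m, (m <= N)%N ->
  exists (W : 'M[R]_(d, m)) (b : 'rV[R]_m), \rank (layer g X W b) = m.
Proof.
move=> np sm m mN.
have [w wI] := @exists_proj R N d X Xd.
pose t := fun i : 'I_N => (X *m w) i 0.
have Hk : forall l : 'I_N -> R,
    (forall a c, \sum_i l i * g (a * t i + c) = 0) -> forall i, l i = 0.
  by move=> l Hl; apply: (@key R g N l t I x0 wI np sm Hl).
have [a [c rk]] := @greedy R N t g Hk m mN.
exists (w *m \row_(j < m) a j), (\row_(j < m) c j).
rewrite -[RHS]rk -mxrank_tr; congr (mxrank _); apply/matrixP => i j.
rewrite /layer mulmxA !mxE !big_ord1 !mxE mul1r.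
by rewrite /t mxE mulrC.
Qed.

Lemma relu_pos (y : R) : 0 < y -> relu y = y.
Proof. by move=> y0; rewrite /relu; apply/max_idPl/ltW. Qed.

Definition fk (k : nat) : R -> R :=
  if k is 0 then id else if k is 1 then cst 1 else cst 0.

Lemma fk_derivable k y : derivable (fk k) y 1.
Proof. by case: k => [|[|k]] /=; [exact: derivable_id|exact: derivable_cst|exact: derivable_cst]. Qed.

Lemma fk_derive k y : derive1 (fk k) y = fk k.+1 y.
Proof.
case: k => [|[|k]] /=.
- by rewrite derive1_id.
- by rewrite derive1_cst.
- by rewrite derive1_cst.
Qed.

Lemma relu_derivn k (y : R) : 0 < y -> derive1n k (@relu R) y = fk k y.
Proof.
elim: k y => [|k IH] y y0; first by rewrite derive1n0 relu_pos.
rewrite derive1nS -fk_derive !derive1E; apply: near_eq_derive; near=> x.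
have : x \in `]0, +oo[ by near: x; apply: near_in_itvoy; rewrite in_itv /= y0.
by rewrite in_itv /= andbT => /IH.
Unshelve. all: by end_near.
Qed.

Lemma relu_smooth : smooth_at (@relu R) 1.
Proof.
move=> n; exists 1 => // y hy k _.
have y0 : 0 < y by move: hy; rewrite ltr_norml => /andP[h _]; lra.
apply: (@near_eq_derivable _ _ _ (fk k)); last exact: fk_derivable.
near=> x.
have : x \in `]0, +oo[ by near: x; apply: near_in_itvoy; rewrite in_itv /= y0.
by rewrite in_itv /= andbT => /relu_derivn ->.
Unshelve. all: by end_near.
Qed.

Lemma relu_npoly : ~ poly_on (@relu R) setT.
Proof.
case=> q Hq.
have q0 : q = 0.
  apply/eqP; apply: contraT => q0.
  pose rs := [seq (- (k.+1)%:R : R) | k <- iota 0 (size q)].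
  have U : uniq rs.
    rewrite map_inj_uniq ?iota_uniq //.
    by move=> x y /oppr_inj /eqP; rewrite eqr_nat eqSS => /eqP.
  have H : all (root q) rs.
    apply/allP => z /mapP [k _ ->]; rewrite /root -Hq //.
    by rewrite /relu max_r // oppr_le0 ltW.
  by have := max_poly_roots q0 H U; rewrite size_map size_iota ltnn.
by have := Hq 1 I; rewrite q0 horner0 relu_pos // => /eqP; rewrite oner_eq0.
Qed.
End PJ.
Section PK.
Variable R : realType.

Lemma hockey n p : (\sum_(l < p.+1) 'C(p - l + n, p - l) = 'C(p + n.+1, p))%N.
Proof.
elim: p => [|p IH]; first by rewrite big_ord1 !bin0.
rewrite big_ord_recl subn0 /=.
under eq_bigr => l _ do rewrite /bump /= add1n subSS.
have e1 : (p.+1 + n.+1 = (p + n.+1).+1)%N by rewrite addSn.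
have e2 : (p.+1 + n = p + n.+1)%N by rewrite addSnnS.
by rewrite IH e1 e2 binS.
Qed.

Lemma rank_sum_le N n (B : 'I_n -> 'M[R]_N) :
  (\rank (\sum_(i < n) B i)%MS <= \sum_(i < n) \rank (B i))%N.
Proof.
elim: n B => [|n IH] B; first by rewrite !big_ord0 mxrank0.
rewrite !big_ord_recr /=.
apply: leq_trans (mxrank_adds_leqif _ _).1 _.
by rewrite leq_add2r IH.
Qed.

Arguments rank_sum_le {N n}.
Definition pw N (j : nat) (v : 'rV[R]_N) : 'rV[R]_N := map_mx (fun x => x ^+ j) v.
Definition aff N n (fs : 'I_n -> 'rV[R]_N) (w : 'I_n -> R) (c : R) : 'rV[R]_N :=
  \sum_(k < n) w k *: fs k + c *: const_mx 1.
Arguments aff {N n}.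
Arguments pw {N}.

Lemma poly_span N n (fs : 'I_n -> 'rV[R]_N) : exists Mf : nat -> 'M[R]_N,
  forall p, (\rank (Mf p) <= 'C(p + n, p))%N /\
    forall w c j, (j <= p)%N -> (pw j (aff fs w c) <= Mf p)%MS.
Proof.
elim: n fs => [|n IH] fs.
  exists (fun _ => <<(const_mx 1 : 'rV[R]_N)>>%MS) => p; split.
    by rewrite genmxE addn0 binn rank_leq_row.
  move=> w c j _; rewrite genmxE.
  rewrite (_ : pw j _ = c ^+ j *: const_mx 1) ?scalemx_sub //.
  by apply/rowP => i; rewrite /pw /aff big_ord0 add0r !mxE !mulr1.
have [Mf HM] := IH (fun k => fs (lift ord0 k)).
pose D l := diag_mx (pw l (fs ord0)).
exists (fun p => (\sum_(l < p.+1) (Mf (p - l)%N *m D l))%MS) => p; split.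
  apply: leq_trans (rank_sum_le _) _.
  rewrite -hockey; apply: leq_sum => l _.
  apply: leq_trans (mxrankM_maxl _ _) _.
  by have [] := HM (p - l)%N.
move=> w c j jp.
pose u := aff (fun k => fs (lift ord0 k)) (fun k => w (lift ord0 k)) c.
have E : pw j (aff fs w c) =
    \sum_(l < j.+1) ((w ord0 ^+ l) *+ 'C(j, l)) *: (pw (j - l)%N u *m D l).
  have Ea : aff fs w c = w ord0 *: fs ord0 + u by rewrite /aff big_ord_recl addrA.
  apply/rowP => i; rewrite Ea /pw summxE.
  rewrite [LHS]mxE [X in X ^+ _]mxE [X in X + _]mxE addrC exprDn.
  apply: eq_bigr => l _.
  rewrite [RHS]mxE /D mul_mx_diag !mxE.
  rewrite exprMn mulrnAl; congr (_ *+ _); ring.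
rewrite E; apply: summx_sub => l _; apply: scalemx_sub.
have lp : (l < p.+1)%N by rewrite ltnS (leq_trans _ jp) // -ltnS.
apply: (sumsmx_sup (Ordinal lp)) => //=.
apply: submxMr; have [_ H] := HM (p - l)%N; apply: H.
by rewrite leq_sub2r.
Qed.

Lemma part3 N d (X : 'M[R]_(N, d)) (g : R -> R) (p : nat) :
  (exists q : {poly R}, (size q).-1 = p /\ forall x, g x = q.[x]) ->
  forall m (W : 'M[R]_(d, m)) (b : 'rV[R]_m),
  (\rank (layer g X W b) <= 'C(p + d, p))%N.
Proof.
case=> q [sq Hg] m W b.
pose fs := fun k : 'I_d => (col k X)^T.
have [Mf HM] := @poly_span N d fs.
have [rk Hsub] := HM p.
rewrite -mxrank_tr; apply: leq_trans (mxrankS _) rk.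
apply/row_subP => j.
have E : row j (layer g X W b)^T =
    \sum_(k < size q) q`_k *: pw k (aff fs (fun k => W k j) (b 0 j)).
  apply/rowP => i; rewrite !mxE Hg horner_coef summxE; apply: eq_bigr => k _.
  rewrite !mxE; congr (_ * (_ ^+ _)).
  rewrite big_ord1 !mxE mul1r summxE; congr (_ + _); last by rewrite mulr1.
  by apply: eq_bigr => k' _; rewrite !mxE mulrC.
rewrite E; apply: summx_sub => k _; apply: scalemx_sub; apply: Hsub.
by rewrite -sq -ltnS (leq_trans (ltn_ord k)) // leqSpred.
Qed.
End PK.

Theorem theorem1 (R : realType) (N d : nat) (X : 'M[R]_(N, d))
  (Xdistinct : injective (fun i : 'I_N => row i X)) :
  (* non-polynomial g, smooth at some point of the interval *)
  (forall g : R -> R,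
     (exists (a b : \bar R),
        ~ poly_on g (open_itv a b) /\
        exists x0 : R, open_itv a b x0 /\ smooth_at g x0) ->
     forall m : nat, (d < m)%N -> (m <= N)%N ->
     exists (W : 'M[R]_(d, m)) (b : 'rV[R]_m), \rank (layer g X W b) = m)
  /\
  (* ReLU *)
  (forall m : nat, (d < m)%N -> (m <= N)%N ->
     exists (W : 'M[R]_(d, m)) (b : 'rV[R]_m), \rank (layer (@relu R) X W b) = m)
  /\
  (* polynomial g of degree p *)
  (forall (g : R -> R) (p : nat),
     (exists q : {poly R}, (size q).-1 = p /\ forall x, g x = q.[x]) ->
     forall (m : nat) (W : 'M[R]_(d, m)) (b : 'rV[R]_m),
       (\rank (layer g X W b) <= 'C(p + d, p))%N).
Proof.
split.
  move=> g [a [b [np [x0 [_ sm]]]]] m _ mN.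
  exact: (@part1 R N d X Xdistinct g _ x0 np sm m mN).
split.
  move=> m _ mN.
  exact: (@part1 R N d X Xdistinct (@relu R) setT 1 (@relu_npoly R) (@relu_smooth R) m mN).
move=> g p Hq m W b.
exact: (@part3 R N d X g p Hq m W b).
Qed.
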